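(* Let $G$ be a topological group with identity $e$. The following statements are equivalent: (1) $G$ is an Alexandroff space; (2) $V(e)$ is open; (3) there exist a topological group $E$ carrying the indiscrete topology and a topological group $F$ carrying the discrete topology such that $E\times F$ and $G$ are homeomorphic topological spaces; (4) there exist a topological space $E$ with the indiscrete topology and a discrete topological space $F$ such that $E\times F$ and $G$ are homeomorphic topological spaces.
   Context: For a topological space $X$ and $a\in X$, $V(a):=\bigcap\{U: U\text{ open}, a\in U\}$; $X$ is an Alexandroff space if $V(a)$ is open for every $a\in X$. The indiscrete topology on a set is the topology whose only open sets are the empty set and the whole set. *)

(* Defs.v *)
From HB Require Import structures.
From mathcomp Require Import all_boot all_order all_algebra.
From mathcomp Require Import all_classical all_reals topology.
Set Implicit Arguments. Unset Strict Implicit. Unset Printing Implicit Defensive.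
Local Open Scope classical_set_scope.

Definition Vnbhs (X : topologicalType) (a : X) : set X :=
  \bigcap_(U in [set U : set X | open U /\ U a]) U.

Definition alexandroff (X : topologicalType) : Prop :=
  forall a : X, open (Vnbhs a).

Definition indiscrete (X : topologicalType) : Prop :=
  forall A : set X, open A -> A = set0 \/ A = setT.

Definition discrete (X : topologicalType) : Prop :=
  forall A : set X, open A.

Definition homeomorphic (X Y : topologicalType) : Prop :=
  exists (f : X -> Y) (g : Y -> X),
    cancel f g /\ cancel g f /\ continuous f /\ continuous g.

Record is_topgroup (T : topologicalType) (mul : T -> T -> T) (inv : T -> T)
    (e : T) : Prop := IsTopGroup {
  tg_mulA : forall x y z, mul x (mul y z) = mul (mul x y) z;
  tg_mul1l : forall x, mul e x = x;
  tg_mul1r : forall x, mul x e = x;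
  tg_mulVl : forall x, mul (inv x) x = e;
  tg_mulVr : forall x, mul x (inv x) = e;
  tg_mul_cont : continuous (fun p : T * T => mul p.1 p.2);
  tg_inv_cont : continuous inv
}.

Definition topgroup (T : topologicalType) : Prop :=
  exists (mul : T -> T -> T) (inv : T -> T) (e : T), is_topgroup mul inv e.

(* Main.v *)
Require Import Defs.
From HB Require Import structures.
From mathcomp Require Import all_boot all_order all_algebra.
From mathcomp Require Import all_classical all_reals topology.
From Stdlib Require Import ClassicalEpsilon.
Set Implicit Arguments. Unset Strict Implicit. Unset Printing Implicit Defensive.
Local Open Scope classical_set_scope.
Definition indisc (T : Type) : Type := T.
HB.instance Definition _ (T : choiceType) := Choice.copy (indisc T) T.

Definition indisc_op (T : Type) : set_system T := fun A => A = set0 \/ A = setT.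

Lemma indisc_opT (T : Type) : indisc_op (@setT T).
Proof. by right. Qed.

Lemma indisc_opI (T : Type) : setI_closed (@indisc_op T).
Proof.
move=> A B [->|->] [->|->]; rewrite ?set0I ?setI0 ?setIT ?setTI; by [left|right].
Qed.

Lemma indisc_opU (T : Type) (I : Type) (f : I -> set T) :
  (forall i, indisc_op (f i)) -> indisc_op (\bigcup_i f i).
Proof.
move=> hf; have [[i fi]|nf] := pselect (exists i, f i = setT).
  by right; apply/seteqP; split => // x _; exists i; rewrite ?fi.
left; apply/seteqP; split => // x [i _ hx].
case: (hf i) => fi; first by rewrite fi in hx.
by exfalso; apply: nf; exists i.
Qed.

HB.instance Definition _ (T : choiceType) :=
  isOpenTopological.Build (indisc T) (@indisc_opT T) (@indisc_opI T) (@indisc_opU T).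

Lemma indisc_nbhs (T : choiceType) (x : indisc T) (A : set (indisc T)) :
  nbhs x A -> A = setT.
Proof.
case=> B [[->|->] Bx sBA] //; apply/seteqP; split => // y _; exact: sBA.
Qed.

Lemma indisc_indiscrete (T : choiceType) : indiscrete (indisc T).
Proof.
move=> A oA; have [[a Aa]|nA] := pselect (exists a, A a).
  by right; apply: (@indisc_nbhs _ a); apply: open_nbhs_nbhs.
by left; apply/seteqP; split => // x Ax; apply: nA; exists x.
Qed.

Lemma indisc_cont (X : topologicalType) (T : choiceType) (f : X -> indisc T) :
  continuous f.
Proof. move=> x A /indisc_nbhs ->; exact: filterT. Qed.

Lemma nbhs_indiscrete (X : topologicalType) (x : X) (Q : set X) :
  indiscrete X -> nbhs x Q -> forall z, Q z.
Proof.
move=> hX Qx z; apply: interior_subset.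
case: (hX _ (@open_interior _ Q)) => h.
  by have : Q° x by []; rewrite h.
by rewrite h.
Qed.

Lemma V_map (X Y : topologicalType) (f : X -> Y) a x :
  continuous f -> Vnbhs a x -> Vnbhs (f a) (f x).
Proof.
move=> cf Vx U [oU Ufa]; apply: (Vx (f @^-1` U)); split => //.
by move/continuousP: cf; apply.
Qed.

Lemma V_trans (X : topologicalType) (a b x : X) :
  Vnbhs a b -> Vnbhs b x -> Vnbhs a x.
Proof. by move=> Vb Vx U [oU Ua]; apply: Vx; split => //; apply: Vb. Qed.

Lemma V_refl (X : topologicalType) (a : X) : Vnbhs a a.
Proof. by move=> U []. Qed.

Lemma nbhs_V (X : topologicalType) (a x : X) (U : set X) :
  nbhs a U -> Vnbhs a x -> U x.
Proof.
move=> Ua Vx; apply: interior_subset; apply: Vx; split => //.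
exact: open_interior.
Qed.

Lemma pair_contl (X Y : topologicalType) (a : X) : continuous (fun y : Y => (a, y)).
Proof.
move=> y W [[Q R] /= [Qa Ry] sub].
apply: filterS Ry => z Rz; apply: sub; split => //=; exact: nbhs_singleton.
Qed.

Lemma pair_contr (X Y : topologicalType) (b : Y) : continuous (fun x : X => (x, b)).
Proof.
move=> x W [[Q R] /= [Qx Rb] sub].
apply: filterS Qx => z Qz; apply: sub; split => //=; exact: nbhs_singleton.
Qed.

Section TG.
Context (G : topologicalType) (mul : G -> G -> G) (inv : G -> G) (e : G)
  (hG : is_topgroup mul inv e).

Let mulA := tg_mulA hG.
Let mul1l := tg_mul1l hG.
Let mul1r := tg_mul1r hG.
Let mulVl := tg_mulVl hG.
Let mulVr := tg_mulVr hG.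

Lemma g_mulKr x y : mul (mul x y) (inv y) = x.
Proof. by rewrite -mulA mulVr mul1r. Qed.
Lemma g_mulVK x y : mul (mul x (inv y)) y = x.
Proof. by rewrite -mulA mulVl mul1r. Qed.
Lemma g_mulKl x y : mul (inv x) (mul x y) = y.
Proof. by rewrite mulA mulVl mul1l. Qed.
Lemma g_mulK x y : mul x (mul (inv x) y) = y.
Proof. by rewrite mulA mulVr mul1l. Qed.
Lemma g_invK x : inv (inv x) = x.
Proof. by rewrite -[RHS](g_mulKr x (inv x)) mulVr mul1l. Qed.
Lemma g_inv_uniq x y : mul x y = e -> inv x = y.
Proof. by move=> h; rewrite -[LHS]mul1r -h g_mulKl. Qed.
Lemma g_invM x y : inv (mul x y) = mul (inv y) (inv x).
Proof. by apply: g_inv_uniq; rewrite -mulA (mulA y) mulVr mul1l mulVr. Qed.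
Lemma g_inv1 : inv e = e.
Proof. by apply: g_inv_uniq; rewrite mul1l. Qed.

Lemma cont_lmul a : continuous (mul a).
Proof.
move=> x; apply: (@continuous_comp _ _ _ (fun y => (a, y)) (fun p : G * G => mul p.1 p.2)).
  exact: pair_contl.
exact: (tg_mul_cont hG).
Qed.

Lemma cont_rmul a : continuous (fun x => mul x a).
Proof.
move=> x; apply: (@continuous_comp _ _ _ (fun y => (y, a)) (fun p : G * G => mul p.1 p.2)).
  exact: pair_contr.
exact: (tg_mul_cont hG).
Qed.

Definition N := Vnbhs e.

Lemma VE a x : Vnbhs a x <-> N (mul x (inv a)).
Proof.
split => h.
  rewrite /N -(mulVr a); have := V_map (@cont_rmul (inv a)) h; exact.
by have := V_map (@cont_rmul a) h; rewrite /= mul1l g_mulVK.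
Qed.

Lemma N1 : N e.
Proof. exact: V_refl. Qed.

Lemma NM x y : N x -> N y -> N (mul x y).
Proof.
move=> Nx Ny; apply: (V_trans Nx).
by rewrite -[X in Vnbhs X](mul1r x); apply: (V_map (@cont_lmul x)).
Qed.

Lemma NV x : N x -> N (inv x).
Proof. by move=> Nx; rewrite /N -g_inv1; apply: V_map => //; exact: (tg_inv_cont hG). Qed.

Lemma NJ g x : N x -> N (mul (mul g x) (inv g)).
Proof.
move=> Nx; have h1 := V_map (@cont_lmul g) Nx.
have h2 := V_map (@cont_rmul (inv g)) h1.
by move: h2; rewrite /= mul1r mulVr.
Qed.

Definition R x y := N (mul x (inv y)).

Lemma R_refl x : R x x.
Proof. by rewrite /R mulVr; exact: N1. Qed.
Lemma R_sym x y : R x y -> R y x.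
Proof. by move=> /NV; rewrite /R g_invM g_invK. Qed.
Lemma R_trans x y z : R x y -> R y z -> R x z.
Proof. by move=> h1 h2; have := NM h1 h2; rewrite /R -mulA g_mulKl. Qed.
Lemma R_mulr x y c : R x y -> R (mul x c) (mul y c).
Proof. by rewrite /R g_invM mulA g_mulKr. Qed.
Lemma R_mull x y c : R x y -> R (mul c x) (mul c y).
Proof. by move=> /(NJ c); rewrite /R g_invM !mulA -(mulA c) -(mulA c). Qed.

Definition rep x := epsilon (inhabits x) (R x).

Lemma rep_spec x : R x (rep x).
Proof. by apply: (epsilon_spec (inhabits x) (R x)); exists x; exact: R_refl. Qed.

Lemma rep_eq x y : R x y -> rep x = rep y.
Proof.
move=> h; rewrite /rep.
have -> : R x = R y.
  apply: funext => z; apply: propext; split => hz.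
    exact: R_trans (R_sym h) hz.
  exact: R_trans h hz.
by rewrite (Prop_irrelevance (inhabits x) (inhabits y)).
Qed.

Lemma rep_id x : rep (rep x) = rep x.
Proof. by apply: rep_eq; apply: R_sym; exact: rep_spec. Qed.

End TG.

Lemma disc_cont1 (T : choiceType) (Y : topologicalType) (f : discrete_topology T -> Y) :
  continuous f.
Proof.
move=> x U Ufx; rewrite nbhs_simpl /=.
apply: open_nbhs_nbhs; split; first exact: discrete_open.
exact: nbhs_singleton Ufx.
Qed.

Lemma disc_cont2 (T : choiceType) (Y : topologicalType)
  (f : (discrete_topology T * discrete_topology T)%type -> Y) : continuous f.
Proof.
move=> [a b] U Ufx; exists ([set a], [set b]); first by split; exact: discrete_set1.
by move=> [c d] [/= -> ->]; exact: nbhs_singleton Ufx.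
Qed.

Lemma rep_repl (G : topologicalType) mul inv e (hG : is_topgroup mul inv e) (x c : G) :
  rep mul inv e (mul (rep mul inv e x) c) = rep mul inv e (mul x c).
Proof. by apply: rep_eq => //; apply: R_mulr => //; apply: R_sym => //; exact: rep_spec. Qed.

Lemma rep_repr (G : topologicalType) mul inv e (hG : is_topgroup mul inv e) (x c : G) :
  rep mul inv e (mul c (rep mul inv e x)) = rep mul inv e (mul c x).
Proof. by apply: rep_eq => //; apply: R_mull => //; apply: R_sym => //; exact: rep_spec. Qed.

Local Notation Esub e := {x | `[< Vnbhs e x >]}.
Local Notation Fsub mul inv e := {x | `[< rep mul inv e x = x >]}.

Theorem mainTheorem10 (G : topologicalType) (mul : G -> G -> G) (inv : G -> G)
    (e : G) (hG : is_topgroup mul inv e) :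
  let s1 := alexandroff G in
  let s2 := open (Vnbhs e) in
  let s3 := exists (E F : topologicalType),
      topgroup E /\ indiscrete E /\ topgroup F /\ discrete F /\
      homeomorphic (E * F)%type G in
  let s4 := exists (E F : topologicalType),
      indiscrete E /\ discrete F /\ homeomorphic (E * F)%type G in
  (s1 <-> s2) /\ (s2 <-> s3) /\ (s3 <-> s4).
Proof.
move=> s1 s2 s3 s4; rewrite /s1 /s2 /s3 /s4.
have mulA := tg_mulA hG.
have mul1l := tg_mul1l hG.
have mul1r := tg_mul1r hG.
have mulVl := tg_mulVl hG.
have mulVr := tg_mulVr hG.
have h21 : open (Vnbhs e) -> alexandroff G.
  move=> oN a.
  have -> : Vnbhs a = (fun x => mul x (inv a)) @^-1` Vnbhs e.
    by rewrite predeqE => x; exact: (VE hG).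
  by move/continuousP: (@cont_rmul _ _ _ _ hG (inv a)); apply.
have h42 : (exists (E F : topologicalType),
      indiscrete E /\ discrete F /\ homeomorphic (E * F)%type G) -> open (Vnbhs e).
  move=> [E [F [iE [dF [h [k [hk [kh [ch ck]]]]]]]]].
  pose b := (k e).2.
  have oS : open [set p : (E * F)%type | p.2 = b].
    rewrite openE => -[x y] /= ->; exists (setT, [set b]).
      split; first exact: filterT.
      by apply: open_nbhs_nbhs; split => //; exact: dF.
    by move=> [u v] [_ /= ->].
  have -> : Vnbhs e = k @^-1` [set p : (E * F)%type | p.2 = b].
    apply: funext => y; apply: propext; split.
      move=> Vy; apply: Vy; split => //.
      by move/continuousP: ck; apply.
    move=> /= hy U [oU Ue].
    have hU : open (h @^-1` U) by move/continuousP: ch; apply.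
    have : nbhs (k e) (h @^-1` U).
      by apply: open_nbhs_nbhs; split => //=; rewrite kh.
    move=> [[Q R] /= [Qa Rb] sub].
    rewrite -(kh y); apply: (sub (k y)); split => /=.
      exact: (nbhs_indiscrete iE Qa).
    by rewrite hy; exact: nbhs_singleton Rb.
  by move/continuousP: ck; apply.
have h23 : open (Vnbhs e) -> exists (E F : topologicalType),
      topgroup E /\ indiscrete E /\ topgroup F /\ discrete F /\
      homeomorphic (E * F)%type G.
  move=> oN.
  have NM' (x y : Esub e) : `[< Vnbhs e (mul (val x) (val y)) >].
    exact: asboolT (NM hG (asboolW (valP x)) (asboolW (valP y))).
  have NV' (x : Esub e) : `[< Vnbhs e (inv (val x)) >].
    exact: asboolT (NV hG (asboolW (valP x))).
  have N1' : `[< Vnbhs e e >] by apply/asboolP; apply: V_refl.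
  have Fr (t : Fsub mul inv e) : rep mul inv e (val t) = val t.
    exact: asboolW (valP t).
  have Fr' (x : G) : `[< rep mul inv e (rep mul inv e x) = rep mul inv e x >].
    exact: asboolT (rep_id hG x).
  exists (indisc (Esub e)), (discrete_topology (Fsub mul inv e)).
  split.
    exists (fun x y : Esub e => (exist _ (mul (val x) (val y)) (NM' x y) : Esub e)).
    exists (fun x : Esub e => (exist _ (inv (val x)) (NV' x) : Esub e)).
    exists (exist _ e N1' : Esub e).
    split.
    - by move=> x y z; apply: val_inj => /=; exact: mulA.
    - by move=> x; apply: val_inj => /=; exact: mul1l.
    - by move=> x; apply: val_inj => /=; exact: mul1r.
    - by move=> x; apply: val_inj => /=; exact: mulVl.
    - by move=> x; apply: val_inj => /=; exact: mulVr.
    - exact: indisc_cont.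
    - exact: indisc_cont.
  split; first exact: indisc_indiscrete.
  split.
    exists (fun x y : Fsub mul inv e =>
      (exist _ (rep mul inv e (mul (val x) (val y))) (Fr' _) : Fsub mul inv e)).
    exists (fun x : Fsub mul inv e =>
      (exist _ (rep mul inv e (inv (val x))) (Fr' _) : Fsub mul inv e)).
    exists (exist _ (rep mul inv e e) (Fr' _) : Fsub mul inv e).
    split.
    - move=> x y z; apply: val_inj => /=.
      by rewrite (rep_repl hG) (rep_repr hG) mulA.
    - by move=> x; apply: val_inj => /=; rewrite (rep_repl hG) mul1l Fr.
    - by move=> x; apply: val_inj => /=; rewrite (rep_repr hG) mul1r Fr.
    - by move=> x; apply: val_inj => /=; rewrite (rep_repl hG) mulVl.
    - by move=> x; apply: val_inj => /=; rewrite (rep_repr hG) mulVr.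
    - exact: disc_cont2.
    - exact: disc_cont1.
  split; first by move=> A; exact: discrete_open.
  have gpf1 (x : G) : `[< Vnbhs e (mul x (inv (rep mul inv e x))) >].
    by apply/asboolP; exact: (rep_spec hG x).
  exists (fun p : (indisc (Esub e) * discrete_topology (Fsub mul inv e))%type =>
    mul (val p.1) (val p.2)).
  exists (fun x : G => ((exist _ (mul x (inv (rep mul inv e x))) (gpf1 x) : Esub e),
                        (exist _ (rep mul inv e x) (Fr' x) : Fsub mul inv e))).
  split.
    move=> [n t] /=.
    have ht : rep mul inv e (mul (val n) (val t)) = val t.
      rewrite -{2}(Fr t); apply: (rep_eq hG).
      rewrite /R (g_mulKr hG); exact: asboolW (valP n).
    congr pair; apply: val_inj => /=.
    - by move: ht => /= ->; rewrite (g_mulKr hG).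
    - exact: ht.
  split.
    move=> x /=; have := g_mulVK hG x (rep mul inv e x); exact.
  split.
    move=> [n t] U /= Uf; rewrite nbhs_simpl /=.
    exists (setT, [set t]); first by split; [exact: filterT | exact: discrete_set1].
    move=> [n' t'] [_ /= ->]; apply: (nbhs_V Uf); apply/(VE hG).
    rewrite (g_invM hG) mulA (g_mulKr hG).
    apply: (NM hG); first exact: asboolW (valP n').
    apply: (NV hG); exact: asboolW (valP n).
  move=> x W /= Wg; rewrite nbhs_simpl /=.
  case: Wg => [[Q R'] /= [Qa Rb] sub].
  have hV : nbhs x (Vnbhs x).
    by apply: open_nbhs_nbhs; split; [exact: h21 | exact: V_refl].
  apply: (filterS _ hV) => y Vy; apply: sub; split => /=.
    by rewrite (indisc_nbhs Qa).
  have hr : rep mul inv e y = rep mul inv e x.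
    by apply: (rep_eq hG); exact: (proj1 (VE hG x y) Vy).
  have -> : (exist _ (rep mul inv e y) (Fr' y) : Fsub mul inv e) =
            exist _ (rep mul inv e x) (Fr' x) by apply: val_inj.
  exact: nbhs_singleton Rb.
have h34 : (exists (E F : topologicalType),
      topgroup E /\ indiscrete E /\ topgroup F /\ discrete F /\
      homeomorphic (E * F)%type G) -> (exists (E F : topologicalType),
      indiscrete E /\ discrete F /\ homeomorphic (E * F)%type G).
  by move=> [E [F [_ [iE [_ [dF hom]]]]]]; exists E, F.
split; first by split; [move=> h; exact: h | exact: h21].
split; split => //.
- by move=> h; apply: h42; apply: h34.
- by move=> h; apply: h23; apply: h42.
Qed.
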